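(* Let $\mathcal{U}$ be a free ultrafilter on $\mathbb{N}$ and ${}^\ast\mathbb{R}=\mathbb{R}^{\mathbb{N}}/\mathcal{U}$. Let $\langle u_n\rangle_{n\in\mathbb{N}}$ be a sequence of real numbers and let $u=[\langle u_n\rangle]\in{}^\ast\mathbb{R}$. If $u$ is finite and $u>u_0$, where $u_0=\operatorname{st}(u)$, then the sequence $\langle u_n\rangle$ possesses a strictly decreasing subsequence.
   Context: A free ultrafilter $\mathcal{U}$ on $\mathbb{N}$ is an ultrafilter containing all cofinite subsets of $\mathbb{N}$. ${}^\ast\mathbb{R}=\mathbb{R}^{\mathbb{N}}/\mathcal{U}$ is the set of equivalence classes of real sequences, two sequences being equivalent iff they agree on a set in $\mathcal{U}$; it is an ordered field with termwise operations and order $[\langle v_n\rangle]<[\langle w_n\rangle]$ iff $\{n: v_n<w_n\}\in\mathcal{U}$, and $\mathbb{R}$ is embedded via constant sequences. An element $u\in{}^\ast\mathbb{R}$ is finite if $-r<u<r$ for some $r\in\mathbb{R}$. For finite $u$, the standard part $\operatorname{st}(u)$ is the unique real number $u_0$ nearest to $u$, i.e. such that $|u-u_0|<\varepsilon$ for every positive real $\varepsilon$. *)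

(* Defs.v *)
From Stdlib Require Import Reals.
Open Scope R_scope.

Definition is_filter (U : (nat -> Prop) -> Prop) : Prop :=
  U (fun _ => True) /\
  ~ U (fun _ => False) /\
  (forall A B : nat -> Prop, U A -> U B -> U (fun n => A n /\ B n)) /\
  (forall A B : nat -> Prop, (forall n, A n -> B n) -> U A -> U B).

Definition is_ultrafilter (U : (nat -> Prop) -> Prop) : Prop :=
  is_filter U /\ forall A : nat -> Prop, U A \/ U (fun n => ~ A n).

Definition cofinite (A : nat -> Prop) : Prop :=
  exists N : nat, forall n : nat, (N <= n)%nat -> A n.

Definition free_ultrafilter (U : (nat -> Prop) -> Prop) : Prop :=
  is_ultrafilter U /\ forall A, cofinite A -> U A.

(* An element of *R is represented by a real
   sequence; all notions below are the ones on equivalence classes, written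
   on representatives (they are invariant under U-a.e. equality). *)

Definition hstd (r : R) : nat -> R := fun _ => r.

Definition hlt (U : (nat -> Prop) -> Prop) (v w : nat -> R) : Prop :=
  U (fun n => v n < w n).

Definition habs (v : nat -> R) : nat -> R := fun n => Rabs (v n).
Definition hminus (v w : nat -> R) : nat -> R := fun n => v n - w n.

Definition hfinite (U : (nat -> Prop) -> Prop) (u : nat -> R) : Prop :=
  exists r : R, hlt U (hstd (- r)) u /\ hlt U u (hstd r).

Definition is_st (U : (nat -> Prop) -> Prop) (u : nat -> R) (u0 : R) : Prop :=
  forall eps : R, 0 < eps -> hlt U (habs (hminus u (hstd u0))) (hstd eps).

Definition has_strict_decr_subseq (u : nat -> R) : Prop :=
  exists phi : nat -> nat,
    (forall k, (phi k < phi (S k))%nat) /\ (forall k, u (phi (S k)) < u (phi k)).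

(* Main.v *)
Require Import Defs.
From Stdlib Require Import Reals.
From Stdlib Require Import Lra Lia Classical ClassicalEpsilon.
Open Scope R_scope.

Lemma key (U : (nat -> Prop) -> Prop) (u : nat -> R) (u0 : R) :
  free_ultrafilter U -> is_st U u u0 -> hlt U (hstd u0) u ->
  forall eps N, 0 < eps -> exists n, (N <= n)%nat /\ u0 < u n /\ u n < u0 + eps.
Proof.
  intros [[[HT [HF [HI HM]]] _] Hcof] Hst Hlt eps N Heps.
  apply NNPP; intro Hno.
  apply HF.
  assert (HC : U (fun n => (N <= n)%nat)) by (apply Hcof; exists N; auto).
  pose proof (Hst eps Heps) as HB.
  unfold hlt, habs, hminus, hstd in *.
  pose proof (HI _ _ Hlt HB) as H1.
  pose proof (HI _ _ H1 HC) as H2.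
  eapply HM; [|exact H2].
  simpl. intros n [[Ha Hb] Hc]. apply Hno. exists n.
  apply Rabs_def2 in Hb. split; [exact Hc|]. lra.
Qed.

Theorem proposition3p5 (U : (nat -> Prop) -> Prop) (u : nat -> R) (u0 : R) :
  free_ultrafilter U ->
  hfinite U u ->
  is_st U u u0 ->
  hlt U (hstd u0) u ->
  has_strict_decr_subseq u.
Proof.
  intros Hfree _ Hst Hlt.
  assert (Hstep : forall m, exists n, u0 < u m -> ((m < n)%nat /\ u0 < u n /\ u n < u m)).
  { intros m. destruct (classic (u0 < u m)) as [Hm|Hm].
    - destruct (key U u u0 Hfree Hst Hlt (u m - u0) (S m)) as [n [H1 [H2 H3]]]; [lra|].
      exists n. intros _. split; [lia|]. lra.
    - exists O. intros; contradiction. }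
  destruct (key U u u0 Hfree Hst Hlt 1 O) as [m0 [_ [Hm0 _]]]; [lra|].
  set (f := fun m => proj1_sig (constructive_indefinite_description _ (Hstep m))).
  assert (Hf : forall m, u0 < u m -> ((m < f m)%nat /\ u0 < u (f m) /\ u (f m) < u m)).
  { intros m. unfold f. destruct (constructive_indefinite_description _ (Hstep m)). simpl. auto. }
  set (phi := fun k => Nat.iter k f m0).
  assert (Hinv : forall k, u0 < u (phi k)).
  { induction k; simpl; [exact Hm0|]. apply (Hf _ IHk). }
  exists phi. split; intro k; simpl; apply (Hf _ (Hinv k)).
Qed.
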